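(* Let $\lambda_1\neq\lambda_2$ be real numbers, let $$J_3=\begin{pmatrix}\lambda_1&1&0\\0&\lambda_1&0\\0&0&\lambda_2\end{pmatrix},$$ and $h>0$. If $\lambda_1=0$, set $\psi=1$, $\phi=h$, $\theta=\dfrac{e^{\lambda_2h}-\lambda_2h-1}{\lambda_2h(e^{\lambda_2h}-1)}$. If $\lambda_1\neq 0$, set $$T_1=\frac{2he^{\lambda_1h}\lambda_1+\dfrac{(\lambda_1+\lambda_2)(e^{\lambda_2h}-e^{\lambda_1h})}{\lambda_1-\lambda_2}-(e^{\lambda_1h}-e^{\lambda_2h})}{2\Big[he^{\lambda_1h}\lambda_1^2-\dfrac{\lambda_1\lambda_2(e^{\lambda_1h}-e^{\lambda_2h})}{\lambda_1-\lambda_2}\Big]},$$ $$\psi=1+\frac{\lambda_1(e^{\lambda_2h}-1)-\lambda_2(e^{\lambda_1h}-1)+\lambda_1\lambda_2(e^{\lambda_1h}-e^{\lambda_2h})T_1}{\lambda_1-\lambda_2},$$ $$\phi=\frac{e^{\lambda_1h}-e^{\lambda_2h}+\big[\lambda_2(e^{\lambda_2h}-1)-\lambda_1(e^{\lambda_1h}-1)\big]T_1}{\lambda_1-\lambda_2},\qquad \theta=\frac{T_1}{\phi}.$$ Then (whenever these expressions are defined and $(1-\phi\lambda_1\theta)(1-\phi\lambda_2\theta)\neq 0$) the difference scheme $$\frac{\mathbf{x}_{k+1}-\psi\mathbf{x}_k}{\phi}=J_3\big[\theta\mathbf{x}_{k+1}+(1-\theta)\mathbf{x}_k\big]$$ is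 exact for the system $\mathbf{x}'=J_3\mathbf{x}$.
   Context: A one-step difference scheme with step size $h>0$ for $\mathbf{x}'=M\mathbf{x}$ is called exact if for every initial vector $\mathbf{x}_0$ the sequence $(\mathbf{x}_k)$ it generates satisfies $\mathbf{x}_k=\mathbf{x}(kh)$ for all $k\ge 0$, where $\mathbf{x}(t)$ solves $\mathbf{x}'=M\mathbf{x}$, $\mathbf{x}(0)=\mathbf{x}_0$. *)

(* Defs.v *)
From HB Require Import structures.
From mathcomp Require Import all_boot all_order all_algebra.
From mathcomp Require Import all_classical all_reals all_analysis.
Set Implicit Arguments. Unset Strict Implicit. Unset Printing Implicit Defensive.
Import Order.TTheory GRing.Theory Num.Theory.
Import numFieldNormedType.Exports.
Local Open Scope ring_scope.

Section Defs.
Variable R : realType.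

Definition solves_linear_ode (n : nat) (M : 'M[R]_n) (X : R -> 'cV[R]_n) : Prop :=
  forall t : R, is_derive t 1 X (M *m X t).

Definition exact_scheme (n : nat) (M : 'M[R]_n) (h : R)
    (step : 'cV[R]_n -> 'cV[R]_n -> Prop) : Prop :=
  forall (x0 : 'cV[R]_n) (x : nat -> 'cV[R]_n) (X : R -> 'cV[R]_n),
    x 0%N = x0 -> (forall k, step (x k) (x k.+1)) ->
    solves_linear_ode M X -> X 0 = x0 ->
    forall k : nat, x k = X (k%:R * h).

Definition theta_step (n : nat) (M : 'M[R]_n) (psi phi theta : R)
    (xk xk1 : 'cV[R]_n) : Prop :=
  phi^-1 *: (xk1 - psi *: xk) = M *m (theta *: xk1 + (1 - theta) *: xk).

Definition J3 (l1 l2 : R) : 'M[R]_3 :=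
  \matrix_(i < 3, j < 3)
    (if i == j then (if (val i < 2)%N then l1 else l2)
     else if ((val i == 0) && (val j == 1))%N then 1 else 0).

Definition T1_num (l1 l2 h : R) : R :=
  2 * h * expR (l1 * h) * l1
  + (l1 + l2) * (expR (l2 * h) - expR (l1 * h)) / (l1 - l2)
  - (expR (l1 * h) - expR (l2 * h)).

Definition T1_den (l1 l2 h : R) : R :=
  2 * (h * expR (l1 * h) * l1 ^+ 2
       - l1 * l2 * (expR (l1 * h) - expR (l2 * h)) / (l1 - l2)).

Definition T1 (l1 l2 h : R) : R := T1_num l1 l2 h / T1_den l1 l2 h.

Definition psi3 (l1 l2 h : R) : R :=
  if l1 == 0 then 1 else
  1 + (l1 * (expR (l2 * h) - 1) - l2 * (expR (l1 * h) - 1)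
       + l1 * l2 * (expR (l1 * h) - expR (l2 * h)) * T1 l1 l2 h) / (l1 - l2).

Definition phi3 (l1 l2 h : R) : R :=
  if l1 == 0 then h else
  (expR (l1 * h) - expR (l2 * h)
   + (l2 * (expR (l2 * h) - 1) - l1 * (expR (l1 * h) - 1)) * T1 l1 l2 h)
  / (l1 - l2).

Definition theta3 (l1 l2 h : R) : R :=
  if l1 == 0 then
    (expR (l2 * h) - l2 * h - 1) / (l2 * h * (expR (l2 * h) - 1))
  else T1 l1 l2 h / phi3 l1 l2 h.

End Defs.

(* Main.v *)
Require Import Defs.
From HB Require Import structures.
From mathcomp Require Import all_boot all_order all_algebra.
From mathcomp Require Import all_classical all_reals all_analysis.
From mathcomp Require Import ring lra.
Import Order.TTheory GRing.Theory Num.Theory.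
Import numFieldNormedType.Exports.
Local Open Scope ring_scope.

Definition i0 : 'I_3 := @Ordinal 3 0 isT.
Definition i1 : 'I_3 := @Ordinal 3 1 isT.
Definition i2 : 'I_3 := @Ordinal 3 2 isT.

Lemma J3v (R : realType) (l1 l2 : R) (w : 'cV[R]_3) :
  [/\ (J3 l1 l2 *m w) i0 0 = l1 * w i0 0 + w i1 0,
      (J3 l1 l2 *m w) i1 0 = l1 * w i1 0 &
      (J3 l1 l2 *m w) i2 0 = l2 * w i2 0].
Proof.
split; rewrite mxE !big_ord_recr big_ord0 /= !mxE /=.
all: rewrite (_ : widen_ord _ (widen_ord _ ord_max) = i0); last by apply: val_inj.
all: rewrite (_ : widen_ord _ ord_max = i1); last by apply: val_inj.
all: rewrite (_ : ord_max = i2); last by apply: val_inj.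
all: ring.
Qed.
Lemma comp_derive (R : realType) (X : R -> 'cV[R]_3) (t : R) (D : 'cV[R]_3) (i : 'I_3) :
  is_derive t (1:R) X D -> is_derive t (1:R) (fun s => X s i 0) (D i 0).
Proof.
move=> [dX vX].
have dc := (derivable_mxP X t 1).1 dX i 0.
apply: DeriveDef => //.
by rewrite -vX derive_mx // mxE.
Qed.

Lemma ode_scalar (R : realType) (f : R -> R) (c k : R) :
  (forall t : R, is_derive t (1:R) f (c * f t + expR (c * t) * k)) ->
  forall t, f t = expR (c * t) * (f 0 + t * k).
Proof.
move=> Hf.
pose g := fun s => expR (- (c * s)) * f s - s * k.
have Hg : forall s : R, is_derive s (1:R) g 0.
  move=> s.
  have He : is_derive s (1:R) (fun s => expR (- (c * s))) (expR (- (c * s)) * (- c)).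
    have := @is_derive1_comp R expR (fun s => - (c * s)) s (expR (- (c * s))) (- c).
    have h1 : is_derive (- (c * s)) (1:R) expR (expR (- (c * s))) by exact: is_derive_expR.
    have h2 : is_derive s (1:R) (fun s => - (c * s)) (- c).
      have -> : (fun s => - (c * s)) = (cst (- c) * id) :> (R -> R).
        by apply/funext => y /=; rewrite mulNr.
      apply: is_derive_eq.
      by rewrite scaler0 addr0 [_%:A]mulr1.
    by move/(_ h1 h2).
  have Hk : is_derive s (1:R) (fun s => s * k) k.
    have -> : (fun s => s * k) = (id * cst k) :> (R -> R) by [].
    apply: is_derive_eq.
    by rewrite scaler0 add0r [_%:A]mulr1.
  have -> : g = ((fun s => expR (- (c * s))) * f) - (fun s => s * k) by [].
  apply: is_derive_eq.
  rewrite /GRing.scale /=.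
  have E : expR (- (c*s)) * expR (c*s) = 1 by rewrite -expRD addNr expR0.
  rewrite mulrDr (mulrA _ (expR (c*s))) E mul1r.
  ring.
move=> t.
have := is_derive_0_is_cst t 0 Hg.
rewrite /g mulr0 oppr0 expR0 mul1r mul0r subr0 => /(congr1 (fun v => expR (c * t) * (v + t * k))).
by rewrite subrK mulrA -expRD addrN expR0 mul1r.
Qed.
Lemma key (R : realType) (l1 l2 h : R) :
  l1 != l2 -> 0 < h ->
  (l1 != 0 -> T1_den l1 l2 h != 0) ->
  phi3 l1 l2 h != 0 ->
  let ps := psi3 l1 l2 h in let ph := phi3 l1 l2 h in
  let T := ph * theta3 l1 l2 h in
  [/\ ps + (ph - T) * l1 = (1 - T * l1) * expR (l1 * h),
      ps + (ph - T) * l2 = (1 - T * l2) * expR (l2 * h) &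
      ph - T + T * expR (l1 * h) = (1 - T * l1) * h * expR (l1 * h)].
Proof.
move=> l12 h0 HD Hph ps ph T; subst ps ph T.
have d0 : l1 - l2 != 0 by rewrite subr_eq0.
case: (eqVneq l1 0) => [l10|l10].
- move: Hph; rewrite /psi3 /phi3 /theta3 l10 eqxx => Hph.
  have l20 : l2 != 0 by rewrite eq_sym -l10.
  have h0' : h != 0 by rewrite gt_eqF.
  have b1 : expR (l2 * h) - 1 != 0.
    rewrite subr_eq0 -expR0; apply/negP => /eqP/expR_inj/eqP.
    by rewrite mulf_eq0 (negbTE l20) (negbTE h0').
  rewrite !mul0r expR0.
  split.
  + ring.
  + field. by rewrite l20 h0' b1.
  + ring.
- have HD' := HD l10.
  have eT : phi3 l1 l2 h * theta3 l1 l2 h = T1 l1 l2 h.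
    by rewrite /theta3 (negbTE l10) mulrC divfK.
  rewrite eT; move: Hph; rewrite /psi3 /phi3 (negbTE l10) => Hph.
  clear HD; move: Hph HD'; set t := T1 l1 l2 h => Hph HD.
  have ht : t * T1_den l1 l2 h = T1_num l1 l2 h by rewrite /t /T1 divfK.
  move: ht HD; rewrite /T1_den /T1_num.
  set a := expR (l1 * h); set b := expR (l2 * h) => ht HD.
  split.
  + field; exact: d0.
  + field; exact: d0.
  + set E := (X in X = _); apply/eqP; rewrite -subr_eq0; apply/eqP.
    have : 2 * l1 * (l1 - l2) * (E - (1 - t * l1) * h * a) =
           (l1 - l2) * (t * (2 * (h * a * l1 ^+ 2 - l1 * l2 * (a - b) / (l1 - l2))) -
             (2 * h * a * l1 + (l1 + l2) * (b - a) / (l1 - l2) - (a - b))).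
      rewrite /E. field. exact: d0.
    rewrite ht subrr mulr0 => H.
    have nz : 2 * l1 * (l1 - l2) != 0.
      rewrite !mulf_eq0 negb_or negb_or l10 d0 !andbT.
      by rewrite pnatr_eq0.
    by apply: (mulfI nz); rewrite mulr0 H.
Qed.

Lemma step_diag (R : realType) (ph th ps l e u v : R) :
  ph != 0 -> 1 - ph * th * l != 0 -> ps + (ph - ph * th) * l = (1 - ph * th * l) * e ->
  ph^-1 * (u - ps * v) = l * (th * u + (1 - th) * v) -> u = e * v.
Proof.
move=> p0 D0 K E.
have E' : u - ps * v = ph * (l * (th * u + (1 - th) * v)) by rewrite -E mulVKf.
apply: (mulIf D0); apply/eqP; rewrite -subr_eq0; apply/eqP.
rewrite (_ : u * (1 - ph * th * l) - e * v * (1 - ph * th * l) =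
   (u - ps * v - ph * (l * (th * u + (1 - th) * v))) +
   v * (ps + (ph - ph * th) * l - (1 - ph * th * l) * e)); last by ring.
by rewrite E' K !subrr mulr0 addr0.
Qed.

Lemma step_top (R : realType) (ph th ps l a h u0 v0 u1 v1 : R) :
  ph != 0 -> 1 - ph * th * l != 0 -> ps + (ph - ph * th) * l = (1 - ph * th * l) * a ->
  ph - ph * th + ph * th * a = (1 - ph * th * l) * h * a ->
  u1 = a * v1 ->
  ph^-1 * (u0 - ps * v0) = l * (th * u0 + (1 - th) * v0) + (th * u1 + (1 - th) * v1) ->
  u0 = a * v0 + h * a * v1.
Proof.
move=> p0 D0 K1 K3 U1 E.
have E' : u0 - ps * v0 = ph * (l * (th * u0 + (1 - th) * v0) + (th * u1 + (1 - th) * v1))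
  by rewrite -E mulVKf.
apply: (mulIf D0); apply/eqP; rewrite -subr_eq0; apply/eqP.
rewrite (_ : u0 * (1 - ph * th * l) - (a * v0 + h * a * v1) * (1 - ph * th * l) =
   (u0 - ps * v0 - ph * (l * (th * u0 + (1 - th) * v0) + (th * u1 + (1 - th) * v1))) +
   v0 * (ps + (ph - ph * th) * l - (1 - ph * th * l) * a) +
   v1 * (ph - ph * th + ph * th * a - (1 - ph * th * l) * h * a) +
   ph * th * (u1 - a * v1)); last by ring.
by rewrite E' K1 K3 U1 !subrr !mulr0 !addr0.
Qed.

Lemma main_exact (R : realType) (l1 l2 h ps ph th : R) :
  ph != 0 ->
  ps + (ph - ph * th) * l1 = (1 - ph * th * l1) * expR (l1 * h) ->
  ps + (ph - ph * th) * l2 = (1 - ph * th * l2) * expR (l2 * h) ->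
  ph - ph * th + ph * th * expR (l1 * h) = (1 - ph * th * l1) * h * expR (l1 * h) ->
  1 - ph * th * l1 != 0 -> 1 - ph * th * l2 != 0 ->
  exact_scheme (J3 l1 l2) h (theta_step (J3 l1 l2) ps ph th).
Proof.
move=> Hph K1 K2 K3 D1 D2.
rewrite /theta_step.
move=> x0 x X Hx0 Hstep HX HX0.
have HX2 : forall t, X t i2 0 = expR (l2 * t) * (X 0 i2 0 + t * 0).
  apply: (@ode_scalar R (fun s => X s i2 0)) => t; apply: is_derive_eq (@comp_derive R X t _ i2 (HX t)) _.
  by have [_ _ ->] := @J3v R l1 l2 (X t); rewrite mulr0 addr0.
have HX1 : forall t, X t i1 0 = expR (l1 * t) * (X 0 i1 0 + t * 0).
  apply: (@ode_scalar R (fun s => X s i1 0)) => t; apply: is_derive_eq (@comp_derive R X t _ i1 (HX t)) _.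
  by have [_ -> _] := @J3v R l1 l2 (X t); rewrite mulr0 addr0.
have HX0' : forall t, X t i0 0 = expR (l1 * t) * (X 0 i0 0 + t * X 0 i1 0).
  apply: (@ode_scalar R (fun s => X s i0 0)) => t; apply: is_derive_eq (@comp_derive R X t _ i0 (HX t)) _.
  by have [-> _ _] := @J3v R l1 l2 (X t); rewrite HX1 mulr0 addr0.
elim=> [|k IH]; first by rewrite mul0r Hx0 HX0.
have S := Hstep k; rewrite IH in S.
have Sc : forall i, (ph^-1 *: (x k.+1 - ps *: X (k%:R * h))) i 0 =
   (J3 l1 l2 *m (th *: x k.+1 + (1 - th) *: X (k%:R * h))) i 0 by move=> i; rewrite S.
have [J0 J1 J2] := @J3v R l1 l2 (th *: x k.+1 + (1 - th) *: X (k%:R * h)).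
have S0 := Sc i0; have S1 := Sc i1; have S2 := Sc i2.
rewrite J0 !mxE in S0; rewrite J1 !mxE in S1; rewrite J2 !mxE in S2.
have U2 := @step_diag R _ _ _ _ _ _ _ Hph D2 K2 S2.
have U1 := @step_diag R _ _ _ _ _ _ _ Hph D1 K1 S1.
have U0 := @step_top R _ _ _ _ _ _ _ _ _ _ Hph D1 K1 K3 U1 S0.
have eS : k.+1%:R * h = h + k%:R * h by rewrite -addn1 natrD; ring.
apply/matrixP => i j; rewrite (ord1 j).
move: (HX0' (k.+1%:R * h)) (HX0' (k%:R * h)) (HX1 (k.+1%:R * h)) (HX1 (k%:R * h))
  (HX2 (k.+1%:R * h)) (HX2 (k%:R * h)).
rewrite eS. move: (X 0 i0 0) (X 0 i1 0) (X 0 i2 0) => c0 c1 c2.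
rewrite (mulrDr l1 h) (mulrDr l2 h) !expRD => E0 E0' E1 E1' E2 E2'.
have [->|/eqP n0] := eqVneq i i0.
  by rewrite U0 E0 E0' E1'; ring.
have [->|/eqP n1] := eqVneq i i1.
  by rewrite U1 E1 E1'; ring.
have -> : i = i2.
  apply: val_inj; case: i n0 n1 => [[|[|[|m]]] Hm] //= n0 n1.
  - by exfalso; apply: n0; apply: val_inj.
  - by exfalso; apply: n1; apply: val_inj.
by rewrite U2 E2 E2'; ring.
Qed.

Theorem theorem7 (R : realType) (l1 l2 h : R) :
  l1 != l2 -> 0 < h ->
  (l1 != 0 -> T1_den l1 l2 h != 0) ->
  phi3 l1 l2 h != 0 ->
  (1 - phi3 l1 l2 h * l1 * theta3 l1 l2 h) *
    (1 - phi3 l1 l2 h * l2 * theta3 l1 l2 h) != 0 ->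
  exact_scheme (J3 l1 l2) h
    (theta_step (J3 l1 l2) (psi3 l1 l2 h) (phi3 l1 l2 h) (theta3 l1 l2 h)).
Proof.
move=> l12 h0 HD Hph Hnz.
have [K1 K2 K3] := @key R l1 l2 h l12 h0 HD Hph.
move: Hnz; rewrite mulf_eq0 negb_or (mulrAC _ l1) (mulrAC _ l2) => /andP [D1 D2].
exact: main_exact Hph K1 K2 K3 D1 D2.
Qed.
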